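(* Let $D$ be an $\ell$-dimensional simplex and $\mathcal{F}$ a nonempty collection of faces of $D$, with $m=\#\mathcal{F}$. Then: (i) the union $\mathcal{P}=\bigcup_{F\in\mathcal{F}}F$ is a simplicial complex inside $D$, and the number of $k$-facets of $D$ contained in $\mathcal{P}$ is $\sum_{r=1}^m(-1)^{r-1}\binom{\ell+1-r}{k+1}\binom{m}{r}$; (ii) letting $\mathcal{C}$ be the set of facets of $D$ not contained in $\mathcal{P}$: (ii.1) every facet in $\mathcal{C}$ has codimension at most $\ell+1-m$; (ii.2) the number of facets in $\mathcal{C}$ of codimension $j$ is $\binom{\ell+1-m}{j}$; (ii.3) the total number of facets in $\mathcal{C}$ is $2^{\ell+1-m}$.
   Context: An $\ell$-simplex $D$ is the convex hull of $\ell+1$ affinely independent points (its vertices). For a nonempty subset $K$ of the vertices with $k+1$ elements, the convex hull of $K$ is a $k$-facet of $D$ (so $D$ itself is its unique $\ell$-facet). A face of $D$ is an $(\ell-1)$-facet. Codimension of a $k$-facet is $\ell-k$. *)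

(* Defs.v *)
From mathcomp Require Import all_boot all_order all_algebra.
From mathcomp Require Import boolp.
Set Implicit Arguments. Unset Strict Implicit. Unset Printing Implicit Defensive.
Import Order.TTheory GRing.Theory Num.Theory.
Local Open Scope ring_scope.

Section Simplex.
Variables (R : realFieldType) (n l : nat).
Variable v : 'I_l.+1 -> 'rV[R]_n.

Definition affine_indep : Prop :=
  forall c : 'I_l.+1 -> R, \sum_i c i = 0 -> \sum_i c i *: v i = 0 ->
    forall i, c i = 0.

Definition conv_hull (K : {set 'I_l.+1}) : 'rV[R]_n -> Prop :=
  fun x => exists w : 'I_l.+1 -> R,
    [/\ forall i, 0 <= w i, forall i, i \notin K -> w i = 0,
        \sum_i w i = 1 & x = \sum_i w i *: v i].

Definition is_kfacet (k : nat) (K : {set 'I_l.+1}) : bool := #|K| == k.+1.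

(* a face = an (l-1)-facet: l vertices, nonempty *)
Definition is_face (K : {set 'I_l.+1}) : bool := (K != set0) && (#|K| == l).

Definition codim (K : {set 'I_l.+1}) : nat := (l - (#|K|).-1)%N.

Definition union_of (Fs : {set {set 'I_l.+1}}) : 'rV[R]_n -> Prop :=
  fun x => exists2 F, F \in Fs & conv_hull F x.

Definition subset_pts (A B : 'rV[R]_n -> Prop) : Prop := forall x, A x -> B x.

(* P is (the underlying space of) a simplicial complex inside D: it is the
   union of a family S of facets of D, closed under taking (nonempty) faces,
   any two of which intersect in a common facet (or in the empty set). *)
Definition simplicial_complex_in (P : 'rV[R]_n -> Prop) : Prop :=
  exists S : {set {set 'I_l.+1}},
    [/\ forall K : {set 'I_l.+1}, K \in S -> K != set0,
        forall K K' : {set 'I_l.+1}, K \in S -> K' \subset K -> K' != set0 -> K' \in S,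
        forall K K' : {set 'I_l.+1}, K \in S -> K' \in S -> forall x,
          (conv_hull K x /\ conv_hull K' x) <-> conv_hull (K :&: K') x
      & forall x, P x <-> exists2 K, K \in S & conv_hull K x].

Definition kfacets_in (P : 'rV[R]_n -> Prop) (k : nat) : {set {set 'I_l.+1}} :=
  [set K | is_kfacet k K && `[< subset_pts (conv_hull K) P >]].

Definition facets_not_in (P : 'rV[R]_n -> Prop) : {set {set 'I_l.+1}} :=
  [set K | (K != set0) && ~~ `[< subset_pts (conv_hull K) P >]].
End Simplex.

(* Main.v *)
Require Import Defs.
From mathcomp Require Import all_boot all_order all_algebra.
From mathcomp Require Import boolp.
From mathcomp Require Import zify ring.
Import Order.TTheory GRing.Theory Num.Theory.
Set Implicit Arguments. Unset Strict Implicit. Unset Printing Implicit Defensive.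
Local Open Scope ring_scope.
Lemma alt_id m : forall a s,
  \sum_(0 <= r < m.+1) (-1)^+r * ('C(m,r) * 'C(m+a-r, s))%:Z =
  (if (m <= s)%N then 'C(a, s-m) else 0)%:Z.
Proof.
elim: m => [|m IH] a s.
  by rewrite big_nat1 /= expr0 mul1r bin0 mul1n !subn0 add0n.
rewrite big_nat_recl //= expr0 mul1r bin0 mul1n subn0.
have E1 : forall i, (0 <= i < m.+1)%N -> (-1) ^+ i.+1 * ('C(m.+1, i.+1) * 'C(m.+1 + a - i.+1, s))%:Z =
   (-1) ^+ i.+1 * ('C(m, i.+1) * 'C(m + a.+1 - i.+1, s))%:Z - (-1)^+i * ('C(m, i) * 'C(m + a - i, s))%:Z.
  move=> i _; rewrite binS addSn subSS addnS subSS mulnDl PoszD exprS; ring.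
rewrite (eq_big_nat _ _ E1) sumrB.
rewrite [X in _ + (X - _)]big_nat_recr //= (@bin_small m m.+1) // mul0n mulr0 addr0.
have H1 := IH a.+1 s; rewrite big_nat_recl //= expr0 mul1r bin0 mul1n subn0 in H1.
rewrite IH addSn -addnS addrA H1.
case: (ltngtP m s) => H.
- have -> : (s - m = (s - m.+1).+1)%N by lia.
  rewrite binS PoszD. ring.
- by rewrite subrr.
- by rewrite H subnn !bin0 subrr.
Qed.

Section Geo.
Variables (R : realFieldType) (n l : nat) (v : 'I_l.+1 -> 'rV[R]_n).
Hypothesis hind : affine_indep v.

Lemma coord_uniq (w w' : 'I_l.+1 -> R) :
  \sum_i w i = 1 -> \sum_i w' i = 1 -> \sum_i w i *: v i = \sum_i w' i *: v i ->
  forall i, w i = w' i.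
Proof.
move=> s1 s2 e i; apply/eqP; rewrite -subr_eq0; apply/eqP.
apply: (hind (c := fun i => w i - w' i)).
  by rewrite sumrB s1 s2 subrr.
by rewrite (eq_bigr (fun i => w i *: v i - w' i *: v i)) ?sumrB ?e ?subrr // => j _; rewrite scalerBl.
Qed.

Lemma conv_sub (K K' : {set 'I_l.+1}) x : K \subset K' -> conv_hull v K x -> conv_hull v K' x.
Proof.
move=> sKK' [w [w0 wK s1 ->]]; exists w; split=> // i iK'.
by apply: wK; apply: contra iK'; apply: (subsetP sKK').
Qed.

Lemma conv_inter (K K' : {set 'I_l.+1}) x : conv_hull v K x -> conv_hull v K' x -> conv_hull v (K :&: K') x.
Proof.
move=> [w [w0 wK s1 ex]] [w' [w0' wK' s1' ex']]; exists w; split=> // i.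
have e := coord_uniq s1 s1' (etrans (esym ex) ex').
rewrite inE negb_and => /orP[/wK //|/wK' ]; by rewrite e.
Qed.

Lemma conv_set0 x : ~ conv_hull v set0 x.
Proof.
move=> [w [w0 wK s1 _]].
have : \sum_i w i = 0 by apply: big1 => i _; apply: wK; rewrite inE.
by rewrite s1; apply/eqP; rewrite oner_eq0.
Qed.

Definition bary (K : {set 'I_l.+1}) : 'I_l.+1 -> R :=
  fun i => if i \in K then (#|K|%:R)^-1 else 0.

Lemma bary_sum (K : {set 'I_l.+1}) : K != set0 -> \sum_i bary K i = 1.
Proof.
move=> K0; rewrite /bary -big_mkcond /= sumr_const -[_ *+ _]mulr_natr mulVf //.
by rewrite pnatr_eq0 -lt0n card_gt0.
Qed.

Lemma conv_bary (K : {set 'I_l.+1}) : K != set0 -> conv_hull v K (\sum_i bary K i *: v i).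
Proof.
move=> K0; exists (bary K); split=> //.
- by move=> i; rewrite /bary; case: ifP => // _; rewrite invr_ge0 ler0n.
- by move=> i /negbTE iK; rewrite /bary iK.
- exact: bary_sum.
Qed.

Lemma conv_bary_sub (K K' : {set 'I_l.+1}) : K != set0 -> conv_hull v K' (\sum_i bary K i *: v i) -> K \subset K'.
Proof.
move=> K0 [w [w0 wK s1 ex]].
have e := coord_uniq (bary_sum K0) s1 ex.
apply/subsetP => i iK; apply/negPn/negP => /wK wi.
move: (e i); rewrite wi /bary iK => /eqP; rewrite invr_eq0 pnatr_eq0 cards_eq0.
by rewrite (negbTE K0).
Qed.

Variable Fs : {set {set 'I_l.+1}}.

Lemma charP (K : {set 'I_l.+1}) : K != set0 ->
  subset_pts (conv_hull v K) (union_of v Fs) <-> exists2 F, F \in Fs & K \subset F.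
Proof.
move=> K0; split.
  move=> /(_ _ (conv_bary K0)) [F FF cF]; exists F => //.
  exact: conv_bary_sub cF.
by move=> [F FF sKF] x cx; exists F => //; apply: conv_sub cx.
Qed.

End Geo.

Local Close Scope ring_scope.
Theorem lemma2p1 (R : realFieldType) (n l : nat) (v : 'I_l.+1 -> 'rV[R]_n)
    (Fs : {set {set 'I_l.+1}}) :
  affine_indep v -> Fs != set0 -> (forall F, F \in Fs -> is_face F) ->
  let m := #|Fs| in
  let P := union_of v Fs in
  let C := facets_not_in v P in
  (simplicial_complex_in v P /\
   forall k, k <= l ->
     (#|kfacets_in v P k|%:Z =
      \sum_(1 <= r < m.+1) ((-1) ^+ r.-1 * ('C(l.+1 - r, k.+1) * 'C(m, r))%:Z))%R)
  /\
  [/\ forall K, K \in C -> codim K <= l.+1 - m,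
      forall j, #|[set K in C | codim K == j]| = 'C(l.+1 - m, j)
    & #|C| = 2 ^ (l.+1 - m)].
Proof.
move=> hind Fs0 hface m P C.
pose M := [set i | [exists F in Fs, i \notin F]].
have faceE : forall F i, F \in Fs -> i \notin F -> F = [set~ i].
  move=> F i FF iF; apply/eqP; rewrite eqEcard; apply/andP; split.
    apply/subsetP => j jF; rewrite !inE; apply: contraNneq iF => <-; exact: jF.
  by rewrite cardsC1 card_ord; case/andP: (hface F FF) => _ /eqP ->.
have exmiss : forall F, F \in Fs -> exists i, i \notin F.
  move=> F FF; case: (pickP (fun i => i \notin F)) => [i iF | H]; first by exists i.
  have : [set: 'I_l.+1] \subset F by apply/subsetP => i _; move: (H i) => /= /negbFE.
  move/subset_leq_card; rewrite cardsT card_ord.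
  by case/andP: (hface F FF) => _ /eqP ->; rewrite ltnn.
have keyM : forall K : {set 'I_l.+1}, (exists2 F, F \in Fs & K \subset F) <-> ~~ (M \subset K).
  move=> K; split.
    move=> [F FF sKF]; have [i iF] := exmiss F FF.
    have iM : i \in M by rewrite inE; apply/existsP; exists F; rewrite FF.
    apply/negP => sMK; have iK := subsetP sMK i iM; move/negP: iF; apply; exact: (subsetP sKF).
  move=> /(@subsetPn _ M K) [i]; rewrite inE => /existsP [F /andP [FF iF]] iK.
  exists F => //; rewrite (faceE F i FF iF); apply/subsetP => j jK; rewrite !inE.
  by apply: contraNneq iK => <-.
have M0 : M != set0.
  have [F FF] := set0Pn _ Fs0; have [i iF] := exmiss F FF.
  by apply/set0Pn; exists i; rewrite inE; apply/existsP; exists F; rewrite FF.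
have cardM : m = #|M|.
  rewrite /m.
  have -> : Fs = [set [set~ i] | i in M].
    apply/setP => F; apply/idP/idP.
      move=> FF; have [i iF] := exmiss F FF; rewrite (faceE F i FF iF).
      by apply: imset_f; rewrite inE; apply/existsP; exists F; rewrite FF.
    move=> /imsetP [i]; rewrite inE => /existsP [G /andP [GF iG]] ->.
    by rewrite -(faceE G i GF iG).
  by rewrite card_imset // => i j /setC_inj /set1_inj.
have charK : forall K : {set 'I_l.+1}, K != set0 -> `[< subset_pts (conv_hull v K) P >] = ~~ (M \subset K).
  move=> K K0; apply/asboolP/idP.
    by move/(charP hind Fs K0)/keyM.
  by move/keyM/(charP hind Fs K0).
have hC : forall K : {set 'I_l.+1}, (K \in C) = (M \subset K).
  move=> K; rewrite !inE; case: (eqVneq K set0) => [->|K0] /=.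
    by rewrite subset0 (negbTE M0).
  by rewrite charK // negbK.
have cardCK : forall K : {set 'I_l.+1}, #|K| + #|~: K| = l.+1.
  by move=> K; rewrite cardsC card_ord.
have mle : (m <= l.+1)%N by have := cardCK M; rewrite cardM; lia.
have codimE : forall K : {set 'I_l.+1}, K \in C -> codim K = #|~: K|.
  move=> K; rewrite hC => MK.
  have : (0 < #|K|)%N.
    rewrite card_gt0; apply: contraNneq M0 => K0; by rewrite -subset0 -K0.
  have := cardCK K; rewrite /codim; lia.
have cardCM : #|~: M| = (l.+1 - m)%N by have := cardCK M; rewrite cardM; lia.
split; [split|split].
- exists [set K | (K != set0) && ~~ (M \subset K)]; split.
  + by move=> K; rewrite inE => /andP [].
  + move=> K K'; rewrite !inE => /andP [_ MK] sK' K'0; rewrite K'0 /=.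
    by apply: contra MK => MK'; apply: subset_trans sK'.
  + move=> K K' _ _ x; split; first by case; apply: conv_inter.
    move=> cx; split; apply: conv_sub cx; [exact: subsetIl | exact: subsetIr].
  + move=> x; split.
      move=> [F FF cF]; exists F => //; rewrite inE.
      case/andP: (hface F FF) => -> _ /=; apply/keyM; by exists F.
    move=> [K]; rewrite inE => /andP [K0 /keyM [F FF sKF]] cK.
    by exists F => //; apply: conv_sub cK.
- move=> k kl.
  have hkf : kfacets_in v P k = [set K : {set 'I_l.+1} | #|K| == k.+1] :\: [set K : {set 'I_l.+1} | M \subset K].
    apply/setP => K; rewrite /kfacets_in !inE /is_kfacet.
    case sK: (#|K| == k.+1); last by rewrite andbF.
    rewrite andbT charK //; by rewrite -card_gt0 (eqP sK).
  have hAB : [set K : {set 'I_l.+1} | #|K| == k.+1] :&: [set K : {set 'I_l.+1} | M \subset K] =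
      (@setC _) @^-1: [set B : {set 'I_l.+1} | B \subset ~: M & #|B| == (l - k)%N].
    apply/setP => K; rewrite !inE setCS andbC; case: (M \subset K) => //=.
    move: (cardCK K) kl; move: #|K| #|~: K| => a b hK kl'; apply/eqP/eqP; lia.
  have := cardsID [set K : {set 'I_l.+1} | M \subset K] [set K : {set 'I_l.+1} | #|K| == k.+1].
  rewrite hAB card_preimset; last exact: setC_inj.
  rewrite cards_draws cardCM card_draws card_ord -hkf => E.
  have A := alt_id m (l.+1 - m) k.+1.
  rewrite (subnKC mle) big_nat_recl // expr0 mul1r bin0 mul1n subn0 in A.
  have R1 : (if (m <= k.+1)%N then 'C(l.+1 - m, k.+1 - m) else 0%N) = 'C(l.+1 - m, l - k).
    case: ifP => h.
      rewrite -bin_sub; last lia.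
      congr binomial; lia.
    rewrite bin_small //; lia.
  rewrite R1 in A.
  rewrite big_add1 /=.
  have S : (\sum_(0 <= i < m) ((-1) ^+ i.+1 * ('C(m, i.+1) * 'C(l.+1 - i.+1, k.+1))%:Z) =
     - \sum_(0 <= i < m) ((-1) ^+ i * ('C(l.+1 - i.+1, k.+1) * 'C(m, i.+1))%:Z) :> int)%R.
    rewrite -sumrN; apply: eq_bigr => i _; rewrite exprS !PoszM; ring.
  rewrite S in A.
  rewrite -E PoszD in A.
  move: A; rewrite -addrA -[X in _ = X]addr0 => /addrI /eqP; rewrite subr_eq0 => /eqP -> //.
- move=> K KC; rewrite codimE // -cardCM; apply: subset_leq_card; rewrite setCS -hC //.
- move=> j.
  have -> : [set K in C | codim K == j] = (@setC _) @^-1: [set B : {set 'I_l.+1} | B \subset ~: M & #|B| == j].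
    apply/setP => K; have hCK := hC K; rewrite !inE setCS -hC; rewrite inE in hCK.
    rewrite hCK hC; case MK: (M \subset K) => //=; by rewrite codimE // hC.
  by rewrite card_preimset; [rewrite cards_draws cardCM | exact: setC_inj].
- have -> : C = (@setC _) @^-1: powerset (~: M).
    apply/setP => K; have hCK := hC K; rewrite inE in hCK.
    by rewrite !inE setCS hCK.
  by rewrite card_preimset; [rewrite card_powerset cardCM | exact: setC_inj].
Qed.
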